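(* The useless arc rule is correct: if $\mathcal N_2$ is obtained from a negotiation $\mathcal N_1$ by one application of the useless arc rule, then $\mathcal N_1\equiv\mathcal N_2$.
   Context: Fix a finite nonempty set $A$ of agents; each $a\in A$ has a nonempty set $Q_a$ of internal states, $Q_A=\prod_{a\in A}Q_a$. A transformer is a left-total relation $\tau\subseteq Q_A\times Q_A$; for $S\subseteq A$ an $S$-transformer is a transformer with $(q,q')\in\tau\Rightarrow q_a=q'_a$ for all $a\notin S$. An atom is $n=(P_n,R_n,\delta_n)$: $P_n\subseteq A$ nonempty (parties), $R_n$ finite nonempty (outcomes), $\delta_n$ assigns to each $r\in R_n$ a $P_n$-transformer, written $\langle n,r\rangle$. A negotiation is $\mathcal N=(N,n_0,n_f,\mathcal X)$ with $N$ a finite set of atoms, $n_0,n_f\in N$ (possibly equal), $T(N)=\{(n,a,r): n\in N,a\in P_n,r\in R_n\}$, $\mathcal X:T(N)\to 2^N$, such that every agent is a party of $n_0$ and of $n_f$, and $\mathcal X(n,a,r)=\emptyset$ iff $n=n_f$. A marking is $x:A\to 2^N$; initial $x_0(a)=\{n_0\}$, final $x_f(a)=\emptyset$. $x$ enables $n$ if $n\in x(a)$ for all $a\in P_n$; then for $r\in R_n$ the step $(n,r)$ leads to $x'$ with $x'(a)=\mathcal X(n,a,r)$ for $a\in P_n$ and $x'(a)=x(a)$ otherwise. A large step is a finite occurrence sequence from $x_0$ to $x_f$. $\mathcal N$ is sound if every atom is enabled at some reachable marking and every occurrence sequence from $x_0$ is a large step or can be extended to one. For $r\in R_{n_f}$,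 the summary transformer is $\langle\mathcal N,r\rangle=\bigcup_\sigma \langle n_1,r_1\rangle\cdots\langle n_k,r_k\rangle$, the union over all large steps $\sigma=(n_1,r_1)\cdots(n_k,r_k)$ ending with $(n_f,r)$, with juxtaposition being relational composition. Two negotiations over the same agents are equivalent, $\mathcal N_1\equiv\mathcal N_2$, if either both are unsound, or both are sound, have the same set of final outcomes $R_{n_f}$, and $\langle\mathcal N_1,r\rangle=\langle\mathcal N_2,r\rangle$ for every final outcome $r$. Useless arc rule. Guard: there are $(n,a,r),(n,b,r)\in T(N)$ and two distinct atoms $n',n''\in N$ such that $a,b\in P_{n'}\cap P_{n''}$, $n',n''\in\mathcal X(n,a,r)$ and $\mathcal X(n,b,r)=\{n'\}$. Action: replace $\mathcal X(n,a,r)$ by $\mathcal X(n,a,r)\setminus\{n''\}$ (everything else unchanged). *)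

(* Defs.v *)
From mathcomp Require Import all_boot.
Set Implicit Arguments. Unset Strict Implicit. Unset Printing Implicit Defensive.

Section Negotiations.
Variables (Ag : finType) (Q : Ag -> Type) (Out : finType).

Definition gstate := forall a : Ag, Q a.
Definition transformer := gstate -> gstate -> Prop.

Definition left_total (t : transformer) := forall q, exists q', t q q'.
Definition S_transformer (S : {set Ag}) (t : transformer) :=
  left_total t /\ forall q q', t q q' -> forall a, a \notin S -> q a = q' a.

Definition rcomp (t1 t2 : transformer) : transformer :=
  fun q q'' => exists q', t1 q q' /\ t2 q' q''.
Definition rid : transformer := fun q q' => q = q'.

(* Atoms are named by the elements of a finite type [Atom]: the atom named n is
   (parties n, outcomes n, delta n).  Outcomes live in a common finite universe Out. *)
Record negotiation (Atom : finType) := Negotiation {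
  parties  : Atom -> {set Ag};
  outcomes : Atom -> {set Out};
  delta    : Atom -> Out -> transformer;
  trans    : Atom -> Ag -> Out -> {set Atom};
  n_init   : Atom;
  n_fin    : Atom }.

Section OneNeg.
Variables (Atom : finType) (N : negotiation Atom).

Definition wf_negotiation : Prop :=
  [/\ (forall n, parties N n != set0),
      (forall n, outcomes N n != set0),
      (forall n r, r \in outcomes N n -> S_transformer (parties N n) (delta N n r)),
      (forall a, a \in parties N (n_init N) /\ a \in parties N (n_fin N)) &
      (forall n a r, a \in parties N n -> r \in outcomes N n ->
          (trans N n a r = set0 <-> n = n_fin N))].

Definition marking := {ffun Ag -> {set Atom}}.
Definition x_init : marking := [ffun _ => [set n_init N]].
Definition x_fin : marking := [ffun _ => set0].

Definition enabled (x : marking) (n : Atom) : Prop :=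
  forall a, a \in parties N n -> n \in x a.

Definition step (x : marking) (n : Atom) (r : Out) (x' : marking) : Prop :=
  [/\ enabled x n, r \in outcomes N n &
      x' = [ffun a => if a \in parties N n then trans N n a r else x a]].

Fixpoint occ (x : marking) (s : seq (Atom * Out)) (x' : marking) : Prop :=
  match s with
  | [::] => x = x'
  | (n, r) :: s' => exists x1, step x n r x1 /\ occ x1 s' x'
  end.

Definition occurrence_sequence (s : seq (Atom * Out)) := exists x, occ x_init s x.
Definition large_step (s : seq (Atom * Out)) := occ x_init s x_fin.

Definition sound : Prop :=
  (forall n, exists s x, occ x_init s x /\ enabled x n) /\
  (forall s, occurrence_sequence s -> exists s', large_step (s ++ s')).

Fixpoint seq_transformer (s : seq (Atom * Out)) : transformer :=
  match s with
  | [::] => rid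
  | (n, r) :: s' => rcomp (delta N n r) (seq_transformer s')
  end.

Definition summary (r : Out) : transformer :=
  fun q q' => exists s, large_step s /\ (exists s0, s = rcons s0 (n_fin N, r)) /\
                        seq_transformer s q q'.
End OneNeg.

Definition equiv_neg (A1 A2 : finType) (N1 : negotiation A1) (N2 : negotiation A2) : Prop :=
  (~ sound N1 /\ ~ sound N2) \/
  [/\ sound N1, sound N2,
      outcomes N1 (n_fin N1) = outcomes N2 (n_fin N2) &
      forall r, r \in outcomes N1 (n_fin N1) ->
        forall q q', summary N1 r q q' <-> summary N2 r q q'].

Definition useless_arc_rule (Atom : finType) (N1 N2 : negotiation Atom) : Prop :=
  exists (n : Atom) (a b : Ag) (r : Out) (n' n'' : Atom),
    [/\ [/\ a \in parties N1 n, b \in parties N1 n, r \in outcomes N1 n & n' != n''],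
        [/\ a \in parties N1 n', b \in parties N1 n', a \in parties N1 n'' & b \in parties N1 n''],
        [/\ n' \in trans N1 n a r, n'' \in trans N1 n a r & trans N1 n b r = [set n']] &
        N2 = Negotiation (parties N1) (outcomes N1) (delta N1)
               (fun m c s => if (m == n) && (c == a) && (s == r)
                             then trans N1 n a r :\ n'' else trans N1 m c s)
               (n_init N1) (n_fin N1)].

End Negotiations.

(* Main.v *)
Require Import Defs.
From mathcomp Require Import all_boot.
From Stdlib Require Import Classical.

Set Implicit Arguments. Unset Strict Implicit. Unset Printing Implicit Defensive.

Definition N2of (Ag : finType) (Q : Ag -> Type) (Out Atom : finType)
  (N1 : negotiation Q Out Atom) (n : Atom) (a : Ag) (r : Out) (n'' : Atom) :=
  Negotiation (parties N1) (outcomes N1) (delta N1)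
               (fun m c s => if (m == n) && (c == a) && (s == r)
                             then trans N1 n a r :\ n'' else trans N1 m c s)
               (n_init N1) (n_fin N1).

Definition nxt (Ag : finType) (Q : Ag -> Type) (Out Atom : finType)
  (N : negotiation Q Out Atom) (x : marking Ag Atom) (m : Atom) (s : Out) : marking Ag Atom :=
  [ffun c => if c \in parties N m then trans N m c s else x c].

Definition upd (Ag Atom : finType) (x : marking Ag Atom) (a : Ag) (n'' : Atom) : marking Ag Atom :=
  [ffun c => if c == a then x a :|: [set n''] else x c].

Definition Rel (Ag Atom : finType) (a b : Ag) (n' n'' : Atom) (x1 x2 : marking Ag Atom) :=
  x1 = x2 \/ (x2 b = [set n'] /\ x1 = upd x2 a n'').

Definition guard (Ag : finType) (Q : Ag -> Type) (Out Atom : finType)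
  (N1 : negotiation Q Out Atom) n a b r n' n'' :=
  [/\ a \in parties N1 n, b \in parties N1 n, a \in parties N1 n', b \in parties N1 n'' &
      [/\ a != b, n' != n'', n'' \in trans N1 n a r & trans N1 n b r = [set n']]].

Lemma relA (Ag : finType) (Q : Ag -> Type) (Out Atom : finType)
  (N1 : negotiation Q Out Atom) n a b r n' n'' x m s :
  guard N1 n a b r n' n'' ->
  Rel a b n' n'' (nxt N1 x m s) (nxt (N2of N1 n a r n'') x m s).
Proof.
case=> Pan Pbn Pan' Pbn'' [ab n'n'' n''in Tb].
have [/andP[/eqP mn /eqP sr]|ne] := boolP ((m == n) && (s == r)).
  subst m s; right; split.
    by rewrite /nxt /= ffunE Pbn eq_sym (negbTE ab) andbF /= Tb.
  apply/ffunP=> c; rewrite /upd /nxt /= !ffunE.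
  have [e|ca] := eqVneq c a; first by rewrite ?e Pan !eqxx /= setUC setD1K.
  by rewrite ?andbF.
left; apply/ffunP=> c; rewrite /nxt /= !ffunE.
case: (c \in parties N1 m) => //.
by case: (m == n) ne => //=; case: (s == r); rewrite ?andbF ?andbT.
Qed.

Lemma enabled_rel (Ag : finType) (Q : Ag -> Type) (Out Atom : finType)
  (N1 : negotiation Q Out Atom) n a b r n' n'' x1 x2 m :
  guard N1 n a b r n' n'' -> Rel a b n' n'' x1 x2 ->
  enabled N1 x1 m <-> enabled N1 x2 m.
Proof.
case=> Pan Pbn Pan' Pbn'' [ab n'n'' n''in Tb].
case=> [->//|[hb ->]]; split=> H c Pc.
- have := H c Pc; rewrite /upd ffunE.
  have [e|//] := eqVneq c a; rewrite ?e; rewrite in_setU in_set1 => /orP[//|/eqP mn''].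
  subst m; have := H b Pbn''; rewrite /upd ffunE eq_sym (negbTE ab) hb in_set1.
  by move/eqP=> e2; rewrite e2 eqxx in n'n''.
- rewrite /upd ffunE; case: eqP => [e|_]; last exact: H.
  by rewrite in_setU -e H.
Qed.

Lemma step_rel (Ag : finType) (Q : Ag -> Type) (Out Atom : finType)
  (N1 : negotiation Q Out Atom) n a b r n' n'' x1 x2 m s :
  guard N1 n a b r n' n'' -> Rel a b n' n'' x1 x2 -> enabled N1 x2 m ->
  Rel a b n' n'' (nxt N1 x1 m s) (nxt (N2of N1 n a r n'') x2 m s).
Proof.
move=> G; have G' := G; case: G' => Pan Pbn Pan' Pbn'' [ab n'n'' n''in Tb].
case=> [->|[hb ->]] En; first exact: relA.
have [Pam|Pam] := boolP (a \in parties N1 m).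
  suff ->: nxt N1 (upd x2 a n'') m s = nxt N1 x2 m s by exact: relA.
  apply/ffunP=> c; rewrite /nxt /upd !ffunE.
  case: ifP => // Pc; case: eqP => // ca; subst c; by rewrite Pam in Pc.
have Pbm : b \notin parties N1 m.
  apply/negP=> Pbm; have := En b Pbm; rewrite hb in_set1 => /eqP mn'.
  by subst m; rewrite Pan' in Pam.
right; split.
  by rewrite /nxt ffunE /= (negbTE Pbm).
apply/ffunP=> c; rewrite /nxt /upd !ffunE /=.
have [->|ca] := eqVneq c a; first by rewrite (negbTE Pam).
case: ifP => // _; by rewrite ?andbF.
Qed.

Lemma sim12 (Ag : finType) (Q : Ag -> Type) (Out Atom : finType)
  (N1 : negotiation Q Out Atom) n a b r n' n'' t :
  guard N1 n a b r n' n'' -> forall x1 x2 y1, Rel a b n' n'' x1 x2 ->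
  occ N1 x1 t y1 -> exists y2, occ (N2of N1 n a r n'') x2 t y2 /\ Rel a b n' n'' y1 y2.
Proof.
move=> G; elim: t => [|[m s] t IH] x1 x2 y1 R /=.
  by move=> <-; exists x2.
case=> z1 [[En Os ->] O].
have En2 : enabled N1 x2 m by exact: (proj1 (enabled_rel m G R) En).
have [y2 [O2 R2]] := IH _ _ _ (step_rel s G R En2) O.
by exists y2; split=> //; exists (nxt (N2of N1 n a r n'') x2 m s).
Qed.

Lemma sim21 (Ag : finType) (Q : Ag -> Type) (Out Atom : finType)
  (N1 : negotiation Q Out Atom) n a b r n' n'' t :
  guard N1 n a b r n' n'' -> forall x1 x2 y2, Rel a b n' n'' x1 x2 ->
  occ (N2of N1 n a r n'') x2 t y2 -> exists y1, occ N1 x1 t y1 /\ Rel a b n' n'' y1 y2.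
Proof.
move=> G; elim: t => [|[m s] t IH] x1 x2 y2 R /=.
  by move=> <-; exists x1.
case=> z2 [[En Os ->] O].
have En1 : enabled N1 x1 m by exact: (proj2 (enabled_rel m G R) En).
have [y1 [O1 R1]] := IH _ _ _ (step_rel s G R En) O.
by exists y1; split=> //; exists (nxt N1 x1 m s).
Qed.

Lemma rel_fin_r (Ag : finType) (Q : Ag -> Type) (Out Atom : finType)
  (N1 : negotiation Q Out Atom) n a b r n' n'' y :
  guard N1 n a b r n' n'' -> Rel a b n' n'' y (x_fin Ag Atom) -> y = x_fin Ag Atom.
Proof.
move=> _ [//|[hb _]]; move: hb; rewrite /x_fin ffunE => /setP/(_ n').
by rewrite in_set0 in_set1 eqxx.
Qed.

Lemma rel_fin_l (Ag : finType) (Q : Ag -> Type) (Out Atom : finType)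
  (N1 : negotiation Q Out Atom) n a b r n' n'' y :
  guard N1 n a b r n' n'' -> Rel a b n' n'' (x_fin Ag Atom) y -> y = x_fin Ag Atom.
Proof.
move=> _ [->//|[_ e]]; have := congr1 (fun f : marking Ag Atom => n'' \in f a) e.
by rewrite /x_fin /upd !ffunE eqxx in_set0 in_setU in_set1 eqxx orbT.
Qed.

Theorem theorem3 (Ag : finType) (Q : Ag -> Type) (Out Atom : finType)
    (N1 N2 : negotiation Q Out Atom) :
  (exists a : Ag, True) ->
  (forall a : Ag, inhabited (Q a)) ->
  wf_negotiation N1 ->
  useless_arc_rule N1 N2 ->
  equiv_neg N1 N2.
Proof.
move=> _ _ _ [n [a [b [r [n' [n'' [[Pan Pbn Orn n'n''] [Pan' Pbn' Pan'' Pbn'']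
   [n'in n''in Tb] ->]]]]]]].
have ab : a != b.
  apply/eqP=> e; subst b; move: n'in n''in; rewrite Tb !in_set1 => _ /eqP e.
  by rewrite e eqxx in n'n''.
have G : guard N1 n a b r n' n'' by split.
change (equiv_neg N1 (N2of N1 n a r n'')).
have Rid : forall x, Rel a b n' n'' x x by move=> x; left.
have LS12 : forall t, large_step N1 t -> large_step (N2of N1 n a r n'') t.
  move=> t L; have [y2 [O R]] := sim12 G (Rid _) L.
  by rewrite /large_step -(rel_fin_l G R).
have LS21 : forall t, large_step (N2of N1 n a r n'') t -> large_step N1 t.
  move=> t L; have [y1 [O R]] := sim21 G (Rid _) L.
  by rewrite /large_step -(rel_fin_r G R).
have S12 : sound N1 -> sound (N2of N1 n a r n'').
  case=> [H1 H2]; split.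
    move=> m; have [t [x [O E]]] := H1 m.
    have [y2 [O2 R]] := sim12 G (Rid _) O.
    by exists t, y2; split=> //; exact: (proj1 (enabled_rel m G R) E).
  move=> t [x O]; have [y1 [O1 _]] := sim21 G (Rid _) O.
  have [t' L] := H2 t (ex_intro _ y1 O1).
  by exists t'; apply: LS12.
have S21 : sound (N2of N1 n a r n'') -> sound N1.
  case=> [H1 H2]; split.
    move=> m; have [t [x [O E]]] := H1 m.
    have [y1 [O1 R]] := sim21 G (Rid _) O.
    by exists t, y1; split=> //; exact: (proj2 (enabled_rel m G R) E).
  move=> t [x O]; have [y2 [O2 _]] := sim12 G (Rid _) O.
  have [t' L] := H2 t (ex_intro _ y2 O2).
  by exists t'; apply: LS21.
have [S|S] := classic (sound N1).
  right; split=> //; first exact: S12.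
  move=> r0 _ q q'; split; case=> t [L [E T]]; exists t.
  - by split; [exact: LS12|split].
  - by split; [exact: LS21|split].
by left; split=> // /S21.
Qed.
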